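(* Let $(\tilde X,\tilde Z)$ be $N\times N$ complex matrices with $\mathrm{rank}([\tilde X,\tilde Z]+I)=1$ and $\det(I+\tilde Z)\neq0$. Define $$X=I+\tilde Z^t,\qquad Z=\tilde X^t(I+\tilde Z^t).$$ Then $X$ is invertible and $\mathrm{rank}(XZX^{-1}-Z+I)=1$. Moreover, for the function $$\psi^b(n,z)=(1+z)^n\det\big\{I+\big(\tilde X-n(I+\tilde Z)^{-1}\big)^{-1}(zI-\tilde Z)^{-1}\big\},$$ one has $$\psi^b(z,e^x-1)=e^{xz}\det\big\{I-X(e^xI-X)^{-1}(zI-Z)^{-1}\big\}.$$
   Context: $M^t$ denotes the transpose of a matrix $M$, and $[A,B]=AB-BA$. *)

(* Defs.v *)
From HB Require Import structures.
From mathcomp Require Import all_boot all_order all_algebra.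
Set Implicit Arguments. Unset Strict Implicit. Unset Printing Implicit Defensive.
Import Order.TTheory GRing.Theory Num.Theory.
Local Open Scope ring_scope.

Definition mxcomm (C : numClosedFieldType) (N : nat) (A B : 'M[C]_N) : 'M[C]_N :=
  A *m B - B *m A.

(* Determinant factor of psi^b(n,w) = (1+w)^n * psib_det Xt Zt n w, i.e.
   det{ I + (Xt - n (I+Zt)^{-1})^{-1} (w I - Zt)^{-1} }. *)
Definition psib_det (C : numClosedFieldType) (N : nat) (Xt Zt : 'M[C]_N) (n w : C) : C :=
  \det (1%:M + invmx (Xt - n *: invmx (1%:M + Zt)) *m invmx (w%:M - Zt)).

(* Main.v *)
Require Import Defs.
From HB Require Import structures.
From mathcomp Require Import all_boot all_order all_algebra.
Import Order.TTheory GRing.Theory Num.Theory.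
Local Open Scope ring_scope.

Lemma invmx_uniq (R : comUnitRingType) n (P Q : 'M[R]_n) :
  P \in unitmx -> P *m Q = 1%:M -> invmx P = Q.
Proof.
move=> uP PQ; rewrite -[invmx P]mulmx1 -PQ mulmxA mulVmx // mul1mx //.
Qed.

Lemma comm_inv (R : comUnitRingType) n (P Q : 'M[R]_n) :
  P \in unitmx -> P *m Q = Q *m P -> Q *m invmx P = invmx P *m Q.
Proof.
move=> uP PQ.
have -> : invmx P *m Q = invmx P *m Q *m P *m invmx P.
  by rewrite -(mulmxA _ P) mulmxV // mulmx1.
by rewrite -(mulmxA _ Q P) -PQ !mulmxA mulVmx // mul1mx.
Qed.

Theorem mainTheorem9 (C : numClosedFieldType) (N : nat) (Xt Zt : 'M[C]_N) :
  \rank ((mxcomm Xt Zt + 1%:M)%R) = 1%N ->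
  \det (1%:M + Zt) != 0 ->
  let X := 1%:M + Zt^T in
  let Z := Xt^T *m (1%:M + Zt^T) in
  [/\ X \in unitmx,
      \rank ((X *m Z *m invmx X - Z + 1%:M)%R) = 1%N &
      forall (z q : C), q != 0 ->
        (Xt - z *: invmx (1%:M + Zt)) \in unitmx ->
        ((q - 1)%:M - Zt) \in unitmx ->
        (q%:M - X) \in unitmx ->
        (z%:M - Z) \in unitmx ->
        psib_det Xt Zt z (q - 1)
          = \det (1%:M - X *m invmx (q%:M - X) *m invmx (z%:M - Z))].
Proof.
move=> rk dA X Z.
have eX : X = (1%:M + Zt)^T by rewrite /X linearD /= tr_scalar_mx.
have uA : (1%:M + Zt) \in unitmx by rewrite unitmxE unitfE.
have uX : X \in unitmx by rewrite eX unitmx_tr.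
split => //.
  have -> : X *m Z *m invmx X = X *m Xt^T.
    by rewrite /Z -/X -!mulmxA mulmxV // mulmx1.
  rewrite -rk -mxrank_tr; congr (\rank _).
  rewrite /mxcomm /Z /X linearD /= tr_scalar_mx linearB /= !trmx_mul.
  rewrite !trmxK linearD /= tr_scalar_mx trmxK.
  rewrite !mulmxDl !mulmxDr !mul1mx !mulmx1.
  by rewrite opprD addrA [Xt + _]addrC addrK.
move=> z q _ uM uB uBt uW.
set A := 1%:M + Zt in uA eX *.
set M := Xt - z *: invmx A in uM *.
set B := (q - 1)%:M - Zt in uB *.
have eBt : q%:M - X = B^T.
  rewrite /B /X linearB /= tr_scalar_mx (raddfB (@scalar_mx C N)) /= opprD addrA.
  by [].
have eW : z%:M - Z = - (M^T *m X).
  rewrite /M linearB /= linearZ /= trmx_inv -eX mulmxBl -scalemxAl mulVmx //.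
  by rewrite scalemx1 /Z -/X opprB.
have uMt : M^T \in unitmx by rewrite unitmx_tr.
have iW : invmx (z%:M - Z) = - (invmx X *m invmx M^T).
  apply: invmx_uniq => //; rewrite eW mulNmx mulmxN opprK -mulmxA.
  by rewrite (mulmxA X) mulmxV // mul1mx mulmxV.
have cX : X *m invmx (q%:M - X) = invmx (q%:M - X) *m X.
  apply: comm_inv => //.
  by rewrite mulmxBl mulmxBr mul_scalar_mx scalar_mxC mul_scalar_mx.
rewrite iW cX mulmxN opprK -mulmxA (mulmxA X) mulmxV // mul1mx.
rewrite eBt /psib_det -/A -/M -/B -det_tr linearD /= tr_scalar_mx trmx_mul.
by rewrite !trmx_inv.
Qed.
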